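(* Let $L\ge 1$, let $\sigma$ be the Lebesgue measure on a fixed convex compact set of $\mathbb{R}^L$ (normalized to be a probability measure), and let $\mu\in\mathcal{P}_2(\mathbb{R}^L)$. Let $\epsilon\ge 0$ and let $\mathcal{G}\subseteq\mathcal{T}_L$ be a convex set such that for every $g\in\mathcal{G}$ there exists $h\in\mathcal{A}$ with $\|g-h\|\le\epsilon$. Let $\delta>0$ be such that for every $g\in\mathcal{G}$, $$\big\|T_\sigma^{g_\sharp\mu}-g\circ T_\sigma^{\mu}\big\|_\sigma<\delta .$$ Then the set $\widehat{\mathcal{G}_\sharp\mu}:=\{T_\sigma^{\nu}:\ \nu\in\mathcal{G}_\sharp\mu\}$, where $\mathcal{G}_\sharp\mu:=\{g_\sharp\mu: g\in\mathcal{G}\}$, is $2\delta$-convex in the following sense: for every $c\in[0,1]$ and all $g_1,g_2\in\mathcal{G}$, setting $g_c=(1-c)g_1+cg_2\in\mathcal{G}$, $$\big\|(1-c)\,T_\sigma^{(g_1)_\sharp\mu}+c\,T_\sigma^{(g_2)_\sharp\mu}-T_\sigma^{(g_c)_\sharp\mu}\big\|_\sigma<2\delta .$$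
   Context: $\mathcal{P}_2(\mathbb{R}^L)$ denotes the set of probability measures $\mu$ on $\mathbb{R}^L$ with finite second moment $\int\|x\|^2\,d\mu(x)<\infty$ that are absolutely continuous with respect to Lebesgue measure with a bounded density. For $\mu\in\mathcal{P}_2(\mathbb{R}^L)$, $T_\sigma^{\mu}:\mathbb{R}^L\to\mathbb{R}^L$ denotes the (unique, by Brenier's theorem) minimizer of $\int\|x-T(x)\|^2\,d\sigma(x)$ over all measurable maps $T$ with $T_\sharp\sigma=\mu$, where the push-forward is defined by $T_\sharp\sigma(B)=\sigma(T^{-1}(B))$ for measurable $B$; the map $\mu\mapsto T_\sigma^\mu$ is the linear optimal transport (LOT) transform. For a map $T:\mathbb{R}^L\to\mathbb{R}^L$, $\|T\|_\sigma:=\big(\int\|T(x)\|^2\,d\sigma(x)\big)^{1/2}$. $\mathcal{T}_L$ is the set of all diffeomorphisms of $\mathbb{R}^L$ onto itself. $\mathcal{A}=\{h(x)=ax+b:\ a>0,\ b\in\mathbb{R}^L\}$ is the set of compositions of isotropic scalings and translations. Convexity of $\mathcal{G}$ means that $(1-c)g_1+cg_2\in\mathcal{G}$ for all $g_1,g_2\in\mathcal{G}$, $c\in[0,1]$ (pointwise convex combination of maps). *)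

(* Defs.v *)
From HB Require Import structures.
From mathcomp Require Import all_boot all_order all_algebra.
From mathcomp Require Import all_classical all_reals all_analysis.
Set Implicit Arguments.
Unset Strict Implicit.
Unset Printing Implicit Defensive.
Import Order.TTheory GRing.Theory Num.Theory.
Import numFieldNormedType.Exports.
Local Open Scope classical_set_scope.
Local Open Scope ring_scope.

Definition Vsp (R : realType) (L : nat) := g_sigma_algebraType (@open 'rV[R]_L).

Definition enorm (R : realType) (L : nat) (x : 'rV[R]_L) : R :=
  Num.sqrt (\sum_(i < L) x ord0 i ^+ 2).

(* lambda is the Lebesgue measure on the Borel sets of R^L: it gives every
   closed box its volume (this determines it uniquely). *)
Definition is_lebesgue (R : realType) (L : nat)
    (lambda : {measure set (Vsp R L) -> \bar R}) : Prop :=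
  forall a b : 'rV[R]_L, (forall i, a ord0 i <= b ord0 i) ->
    lambda [set x : Vsp R L | forall i, a ord0 i <= x ord0 i <= b ord0 i]
    = (\prod_(i < L) (b ord0 i - a ord0 i))%:E.

Definition L2norm (R : realType) (L : nat)
    (sigma : {measure set (Vsp R L) -> \bar R}) (T : 'rV[R]_L -> 'rV[R]_L)
    : \bar R :=
  Lnorm sigma 2%:E (fun x : Vsp R L => (enorm (T x))%:E).

Definition tcost (R : realType) (L : nat)
    (sigma : {measure set (Vsp R L) -> \bar R}) (T : 'rV[R]_L -> 'rV[R]_L)
    : \bar R :=
  (\int[sigma]_x ((enorm (x - T x)) ^+ 2)%:E)%E.

Definition pushes (R : realType) (L : nat)
    (sigma : {measure set (Vsp R L) -> \bar R}) (mu : set (Vsp R L) -> \bar R)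
    (T : 'rV[R]_L -> 'rV[R]_L) : Prop :=
  measurable_fun [set: Vsp R L] (T : Vsp R L -> Vsp R L) /\
  forall A : set (Vsp R L), measurable A -> pushforward sigma (T : Vsp R L -> Vsp R L) A = mu A.

Definition is_OT_map (R : realType) (L : nat)
    (sigma : {measure set (Vsp R L) -> \bar R}) (mu : set (Vsp R L) -> \bar R)
    (T : 'rV[R]_L -> 'rV[R]_L) : Prop :=
  pushes sigma mu T /\
  forall T', pushes sigma mu T' -> (tcost sigma T <= tcost sigma T')%E.

(* The LOT transform T_sigma^mu: the (Brenier, sigma-a.e. unique) optimal map,
   chosen by Hilbert's epsilon (default 0 if none exists). *)
Definition LOT (R : realType) (L : nat)
    (sigma : {measure set (Vsp R L) -> \bar R}) (mu : set (Vsp R L) -> \bar R)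
    : 'rV[R]_L -> 'rV[R]_L :=
  xget (fun _ => 0) [set T | is_OT_map sigma mu T].

Definition in_P2 (R : realType) (L : nat)
    (lambda : {measure set (Vsp R L) -> \bar R})
    (mu : probability (Vsp R L) R) : Prop :=
  (\int[mu]_x ((enorm x) ^+ 2)%:E < +oo)%E /\
  exists (f : Vsp R L -> R) (M : R),
    measurable_fun [set: Vsp R L] f /\ (forall x, 0 <= f x <= M) /\
    forall A : set (Vsp R L), measurable A ->
      mu A = (\int[lambda]_(x in A) (f x)%:E)%E.

Definition diffeo (R : realType) (L : nat) (g : 'rV[R]_L -> 'rV[R]_L) : Prop :=
  exists ginv : 'rV[R]_L -> 'rV[R]_L,
    cancel g ginv /\ cancel ginv g /\
    (forall x, differentiable g x) /\ (forall x, differentiable ginv x).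

Definition scal_transl (R : realType) (L : nat) (h : 'rV[R]_L -> 'rV[R]_L)
    : Prop :=
  exists (a : R) (b : 'rV[R]_L), 0 < a /\ forall x, h x = a *: x + b.

Definition convcomb (R : realType) (L : nat) (c : R)
    (g1 g2 : 'rV[R]_L -> 'rV[R]_L) : 'rV[R]_L -> 'rV[R]_L :=
  fun x => (1 - c) *: g1 x + c *: g2 x.

Definition push (R : realType) (L : nat) (mu : set (Vsp R L) -> \bar R)
    (g : 'rV[R]_L -> 'rV[R]_L) : set (Vsp R L) -> \bar R :=
  pushforward mu (g : Vsp R L -> Vsp R L).

(* Main.v *)
Set Warnings "-all".
Require Import Defs.
From HB Require Import structures.
From mathcomp Require Import all_boot all_order all_algebra.
From mathcomp Require Import all_classical all_reals all_analysis.
From mathcomp Require Import measurable_realfun.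
Import Order.TTheory GRing.Theory Num.Theory.
Import numFieldNormedType.Exports.
Local Open Scope classical_set_scope.
Local Open Scope ring_scope.

Lemma cont_meas (R : realType) (L : nat) (f : 'rV[R]_L -> R) :
  continuous f -> measurable_fun [set: Vsp R L] (f : Vsp R L -> R).
Proof.
move=> /continuousP cf; apply: (measurability _ (measurable_realfun.RGenOpens.measurableE R)).
move=> _ [_ [a [b ->] <-]]; apply: sub_sigma_algebra; rewrite setTI.
exact/cf/interval_open.
Qed.

Lemma LOT_meas (R : realType) (L : nat) sigma (nu : set (Vsp R L) -> \bar R) :
  measurable_fun [set: Vsp R L] (LOT sigma nu : Vsp R L -> Vsp R L).
Proof.
rewrite /LOT; case: xgetP => [T -> [[mT _] _]|_]; first exact: mT.
exact: measurable_cst.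
Qed.

Definition cmeas (R : realType) (L : nat) (F : 'rV[R]_L -> 'rV[R]_L) :=
  forall i, measurable_fun [set: Vsp R L] (fun x : Vsp R L => F x ord0 i).
Arguments cmeas {R L}.

Lemma cmeas_LOT (R : realType) (L : nat) sigma (nu : set (Vsp R L) -> \bar R) :
  cmeas (LOT sigma nu).
Proof.
move=> i; apply: (measurableT_comp (f := fun x : Vsp R L => x ord0 i)).
  by apply: cont_meas; exact: (@coord_continuous R 1 L ord0 i).
exact: LOT_meas.
Qed.

Lemma cmeas_compLOT (R : realType) (L : nat) sigma (nu : set (Vsp R L) -> \bar R)
  (g : 'rV[R]_L -> 'rV[R]_L) : diffeo g -> cmeas (fun x => g (LOT sigma nu x)).
Proof.
move=> [gi [_ [_ [dg _]]]] i.
apply: (measurableT_comp (f := fun x : Vsp R L => g x ord0 i)); last exact: LOT_meas.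
apply: (@cont_meas R L) => x.
apply: (continuous_comp (f := g) (g := fun y : 'rV[R]_L => y ord0 i)).
  exact: differentiable_continuous.
exact: coord_continuous.
Qed.

Lemma cmeasD (R : realType) (L : nat) (F G : 'rV[R]_L -> 'rV[R]_L) :
  cmeas F -> cmeas G -> cmeas (fun x => F x + G x).
Proof.
move=> mF mG i; rewrite (_ : (fun x => _) = (fun x => F x ord0 i + G x ord0 i)).
  exact: measurable_funD.
by apply/funext => x; rewrite mxE.
Qed.

Lemma cmeasN (R : realType) (L : nat) (F : 'rV[R]_L -> 'rV[R]_L) :
  cmeas F -> cmeas (fun x => - F x).
Proof.
move=> mF i; rewrite (_ : (fun x => _) = (fun x => - F x ord0 i)).
  exact: measurableT_comp.
by apply/funext => x; rewrite mxE.
Qed.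

Lemma cmeasZ (R : realType) (L : nat) (k : R) (F : 'rV[R]_L -> 'rV[R]_L) :
  cmeas F -> cmeas (fun x => k *: F x).
Proof.
move=> mF i; rewrite (_ : (fun x => _) = (fun x => k * F x ord0 i)).
  exact: measurable_funM.
by apply/funext => x; rewrite mxE.
Qed.

Lemma cmeas_enorm (R : realType) (L : nat) (F : 'rV[R]_L -> 'rV[R]_L) :
  cmeas F -> measurable_fun [set: Vsp R L] (fun x : Vsp R L => enorm (F x)).
Proof.
move=> mF; rewrite /enorm.
apply: (measurableT_comp (f := @Num.sqrt R)).
  by apply: continuous_measurable_fun; exact: sqrt_continuous.
apply: measurable_sum => i.
exact: measurable_funM.
Qed.
From mathcomp Require Import ring lra.
From mathcomp Require Import ring lra.
Section E.
Variables (R : realType) (L : nat).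
Lemma cs (a b : 'I_L -> R) :
  \sum_i a i * b i <= Num.sqrt (\sum_i a i ^+ 2) * Num.sqrt (\sum_i b i ^+ 2).
Proof.
set A := \sum_i a i ^+ 2; set B := \sum_i b i ^+ 2; set C := \sum_i a i * b i.
have A0 : 0 <= A by apply: sumr_ge0 => i _; exact: sqr_ge0.
have B0 : 0 <= B by apply: sumr_ge0 => i _; exact: sqr_ge0.
set s := Num.sqrt A; set t := Num.sqrt B.
have s0 : 0 <= s by exact: sqrtr_ge0.
have t0 : 0 <= t by exact: sqrtr_ge0.
have [sz|spos] := eqVneq s 0.
  have : A = 0 by apply/eqP; rewrite eq_le A0 andbT -sqrtr_eq0; exact/eqP.
  move/eqP; rewrite psumr_eq0 => [/allP Ha|i _]; last exact: sqr_ge0.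
  rewrite /C big1 ?sz ?mul0r// => i _.
  have := Ha i (mem_index_enum i); rewrite sqrf_eq0 => /eqP ->; by rewrite mul0r.
have [tz|tpos] := eqVneq t 0.
  have : B = 0 by apply/eqP; rewrite eq_le B0 andbT -sqrtr_eq0; exact/eqP.
  move/eqP; rewrite psumr_eq0 => [/allP Ha|i _]; last exact: sqr_ge0.
  rewrite /C big1 ?tz ?mulr0// => i _.
  have := Ha i (mem_index_enum i); rewrite sqrf_eq0 => /eqP ->; by rewrite mulr0.
have sp : 0 < s by rewrite lt_def spos.
have tp : 0 < t by rewrite lt_def tpos.
have H : 0 <= \sum_i (t * a i - s * b i) ^+ 2 by apply: sumr_ge0 => i _; exact: sqr_ge0.
have E : forall i, (t * a i - s * b i) ^+ 2 =
   t ^+ 2 * (a i ^+ 2) - (2 * s * t) * (a i * b i) + s ^+ 2 * (b i ^+ 2).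
  by move=> i; ring.
rewrite (eq_bigr _ (fun i _ => E i)) big_split /= sumrB -!mulr_sumr in H.
rewrite -/A -/B -/C /t /s !sqr_sqrtr // -/s -/t in H.
have st : 0 < s * t by exact: mulr_gt0.
have : s * t * C <= s * t * (s * t).
  have -> : s * t * (s * t) = A * B.
    by rewrite -(sqr_sqrtr A0) -(sqr_sqrtr B0) -/s -/t; ring.
  nra.
by rewrite ler_pM2l.
Qed.
Lemma enorm_ge0 (x : 'rV[R]_L) : 0 <= enorm x.
Proof. exact: sqrtr_ge0. Qed.

Lemma enormD (x y : 'rV[R]_L) : enorm (x + y) <= enorm x + enorm y.
Proof.
rewrite /enorm.
set A := \sum_i x ord0 i ^+ 2; set B := \sum_i y ord0 i ^+ 2.
have A0 : 0 <= A by apply: sumr_ge0 => i _; exact: sqr_ge0.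
have B0 : 0 <= B by apply: sumr_ge0 => i _; exact: sqr_ge0.
have hc := cs (fun i => x ord0 i) (fun i => y ord0 i).
have E : forall i, (x + y) ord0 i ^+ 2 = x ord0 i ^+ 2 + 2 * (x ord0 i * y ord0 i) + y ord0 i ^+ 2.
  by move=> i; rewrite mxE; ring.
rewrite (eq_bigr _ (fun i _ => E i)) !big_split /= -mulr_sumr -/A -/B.
have s0 := sqrtr_ge0 A; have t0 := sqrtr_ge0 B.
rewrite -(ger0_norm (addr_ge0 s0 t0)) -sqrtr_sqr ler_sqrt; last exact: sqr_ge0.
rewrite sqrrD !sqr_sqrtr //. simpl in hc. nra.
Qed.

Lemma enormZ (k : R) (x : 'rV[R]_L) : enorm (k *: x) = `|k| * enorm x.
Proof.
rewrite /enorm.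
have E : forall i, (k *: x) ord0 i ^+ 2 = k ^+ 2 * x ord0 i ^+ 2.
  by move=> i; rewrite mxE; ring.
rewrite (eq_bigr _ (fun i _ => E i)) -mulr_sumr sqrtrM ?sqr_ge0 // sqrtr_sqr //.
Qed.

Lemma enormN (x : 'rV[R]_L) : enorm (- x) = enorm x.
Proof.
by rewrite -scaleN1r enormZ normrN normr1 mul1r.
Qed.
End E.
Section LN.
Context d (T : measurableType d) (R : realType).
Variable mu : {measure set T -> \bar R}.
Local Notation N f := (Lnorm mu 2%:E (fun x => (f x)%:E)).

Lemma mpow (f : T -> R) : measurable_fun setT f ->
  measurable_fun setT (fun x => ((`|f x| `^ 2)%:E)).
Proof.
move=> mf; apply/measurable_EFinP.
apply: (@measurableT_comp _ _ _ _ _ _ (@powR R ^~ 2)) => //.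
exact: measurableT_comp.
Qed.

Lemma LN_le (f g : T -> R) : measurable_fun setT f -> measurable_fun setT g ->
  (forall x, 0 <= f x <= g x) -> (N f <= N g)%E.
Proof.
move=> mf mg fg; rewrite unlock /Lnorm.
under eq_integral do rewrite abse_EFin poweR_EFin.
under [X in (_ <= X `^ _)%E]eq_integral do rewrite abse_EFin poweR_EFin.
apply: gt0_ler_poweR.
- by rewrite invr_ge0.
- by rewrite in_itv /= leey andbT; apply: integral_ge0 => x _; rewrite lee_fin powR_ge0.
- by rewrite in_itv /= leey andbT; apply: integral_ge0 => x _; rewrite lee_fin powR_ge0.
rewrite ge0_le_integral//.
- exact: mpow.
- exact: mpow.
move=> x _; rewrite lee_fin; have /andP[f0 fg'] := fg x.
rewrite ge0_ler_powR ?nnegrE//.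
by rewrite !ger0_norm // (le_trans f0).
Qed.

Lemma LN_scale (k : R) (f : T -> R) : 0 <= k -> measurable_fun setT f ->
  N (fun x => k * f x) = (k%:E * N f)%E.
Proof.
move=> k0 mf; rewrite unlock /Lnorm.
under eq_integral do rewrite abse_EFin poweR_EFin normrM powRM// EFinM.
rewrite ge0_integralZl_EFin//.
under [X in (_ = _ * X `^ _)%E]eq_integral do rewrite abse_EFin poweR_EFin.
rewrite poweRM ?lee_fin ?powR_ge0 ?integral_ge0//.
rewrite poweR_EFin -powRrM mulfV // powRr1 // ger0_norm //. exact: mpow.
Qed.

Lemma LN_add (f g : T -> R) : measurable_fun setT f -> measurable_fun setT g ->
  (N (fun x => f x + g x) <= N f + N g)%E.
Proof.
move=> mf mg.
have := @minkowski_EFin _ _ _ mu f g 2 mf mg; rewrite ler1n; exact.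
Qed.
End LN.
Lemma fin3 (R : realType) (x y z : \bar R) (c d : R) : 0 <= c -> c <= 1 ->
  (0 <= x)%E -> (0 <= y)%E -> (0 <= z)%E -> (x < d%:E)%E -> (y < d%:E)%E -> (z < d%:E)%E ->
  ((1 - c)%:E * x + c%:E * y + z < (2 * d)%:E)%E.
Proof.
move=> c0 c1 x0 y0 z0 xd yd zd.
case: x x0 xd => [x| |] // x0 xd; try by rewrite ltNge leey in xd.
case: y y0 yd => [y| |] // y0 yd; try by rewrite ltNge leey in yd.
case: z z0 zd => [z| |] // z0 zd; try by rewrite ltNge leey in zd.
rewrite !lee_fin !lte_fin in x0 y0 z0 xd yd zd.
rewrite -!EFinM -!EFinD lte_fin; nra.
Qed.

Theorem proposition2 (R : realType) (L : nat) (hL : (0 < L)%N)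
    (lambda : {measure set (Vsp R L) -> \bar R}) (hlambda : is_lebesgue lambda)
    (K : set 'rV[R]_L) (hKc : compact K)
    (hKconv : convex_set (K : set (convex_lmodType 'rV[R]_L)))
    (hK0 : (0 < lambda K)%E)
    (sigma : probability (Vsp R L) R)
    (hsigma : forall A : set (Vsp R L), measurable A ->
        sigma A = (lambda (A `&` K) * ((fine (lambda K))^-1)%:E)%E)
    (mu : probability (Vsp R L) R) (hmu : in_P2 lambda mu)
    (eps : R) (heps : 0 <= eps)
    (G : set ('rV[R]_L -> 'rV[R]_L))
    (hGdiff : forall g, G g -> diffeo g)
    (hGconv : forall g1 g2 (c : R), G g1 -> G g2 -> 0 <= c <= 1 ->
        G (convcomb c g1 g2))
    (hGA : forall g, G g -> exists h, scal_transl h /\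
        (L2norm mu (fun x => (g x - h x)%R)
          <= eps%:E)%E)
    (delta : R) (hdelta : 0 < delta)
    (hG : forall g, G g ->
        (L2norm sigma (fun x => (LOT sigma (push mu g) x
                                - g (LOT sigma mu x))%R) < delta%:E)%E) :
  forall (c : R) g1 g2, 0 <= c <= 1 -> G g1 -> G g2 ->
    (L2norm sigma (fun x => ((1 - c) *: LOT sigma (push mu g1) x
                            + c *: LOT sigma (push mu g2) x
                            - LOT sigma (push mu (convcomb c g1 g2)) x)%R)
       < (2 * delta)%R%:E)%E.
Proof.
move=> c g1 g2 /andP[c0 c1] G1 G2.
set T0 := LOT sigma mu.
set T1 := LOT sigma (push mu g1).
set T2 := LOT sigma (push mu g2).
set Tc := LOT sigma (push mu (convcomb c g1 g2)).
have Gc : G (convcomb c g1 g2) by apply: hGconv => //; rewrite c0 c1.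
have h1 := hG _ G1; have h2 := hG _ G2; have hc := hG _ Gc.
rewrite -/T0 -/T1 in h1; rewrite -/T0 -/T2 in h2; rewrite -/T0 -/Tc in hc.
set a1 := fun x => enorm (T1 x - g1 (T0 x)).
set a2 := fun x => enorm (T2 x - g2 (T0 x)).
set ac := fun x => enorm (Tc x - convcomb c g1 g2 (T0 x)).
have m1 : measurable_fun [set: Vsp R L] a1.
  apply: cmeas_enorm; apply: cmeasD; first exact: cmeas_LOT.
  by apply: cmeasN; apply: cmeas_compLOT; exact: hGdiff.
have m2 : measurable_fun [set: Vsp R L] a2.
  apply: cmeas_enorm; apply: cmeasD; first exact: cmeas_LOT.
  by apply: cmeasN; apply: cmeas_compLOT; exact: hGdiff.
have mc : measurable_fun [set: Vsp R L] ac.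
  apply: cmeas_enorm; apply: cmeasD; first exact: cmeas_LOT.
  by apply: cmeasN; apply: cmeas_compLOT; exact: hGdiff.
have mF : measurable_fun [set: Vsp R L]
    (fun x => enorm ((1 - c) *: T1 x + c *: T2 x - Tc x)).
  apply: cmeas_enorm; apply: cmeasD; last by apply: cmeasN; exact: cmeas_LOT.
  by apply: cmeasD; apply: cmeasZ; exact: cmeas_LOT.
have m1' : measurable_fun [set: Vsp R L] (fun x => (1 - c) * a1 x).
  by apply: measurable_funM.
have m2' : measurable_fun [set: Vsp R L] (fun x => c * a2 x).
  by apply: measurable_funM.
have m12 : measurable_fun [set: Vsp R L] (fun x => (1 - c) * a1 x + c * a2 x).
  exact: measurable_funD.
have m123 : measurable_fun [set: Vsp R L]
    (fun x => ((1 - c) * a1 x + c * a2 x) + ac x).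
  exact: measurable_funD.
have pw : forall x, 0 <= enorm ((1 - c) *: T1 x + c *: T2 x - Tc x) <=
    ((1 - c) * a1 x + c * a2 x) + ac x.
  move=> x; rewrite enorm_ge0 /=.
  have -> : (1 - c) *: T1 x + c *: T2 x - Tc x =
     (1 - c) *: (T1 x - g1 (T0 x)) + c *: (T2 x - g2 (T0 x))
       + - (Tc x - convcomb c g1 g2 (T0 x)).
    by rewrite /convcomb !scalerBr opprB (addrACA ((1 - c) *: T1 x)) -opprD -[RHS]addrA addKr.
  apply: (le_trans (enormD _ _ _ _)).
  rewrite enormN lerD2r; apply: (le_trans (enormD _ _ _ _)).
  by rewrite !enormZ !ger0_norm // subr_ge0.
rewrite /L2norm.
apply: (le_lt_trans (@LN_le _ _ _ sigma _ _ mF m123 pw)).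
apply: (le_lt_trans (@LN_add _ _ _ sigma _ _ m12 mc)).
apply: (le_lt_trans (leeD2r _ (@LN_add _ _ _ sigma _ _ m1' m2'))).
rewrite (@LN_scale _ _ _ sigma _ _ _ m1) ?subr_ge0 // (@LN_scale _ _ _ sigma _ _ _ m2) //.
apply: fin3 => //; try exact: Lnorm_ge0.
Qed.
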